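(* Let $(S,d)$ and $(S',d')$ be Polish spaces and let $g:S'\times S\to\mathbb{R}$ be a (Borel measurable) map that is $K$-Lipschitz in the second variable, i.e. $|g(x,y)-g(x,z)|\le K\,d(y,z)$ for all $x\in S'$, $y,z\in S$. Let $X$ be an $S'$-valued random variable and $Y,Z$ be $S$-valued random variables with $X$ independent of $Y$ and $X$ independent of $Z$, and suppose the cumulative distribution function of $g(X,Y)$ is Lipschitz with constant $L$. Then for all $x\in\mathbb{R}$, $|\mathbb{P}(g(X,Y)\le x)-\mathbb{P}(g(X,Z)\le x)|\le(1+L)(1\vee K)\,\rho_P^S(Y,Z)$.
   Context: For a Polish space $(S,d)$ and $\mu,\nu\in\mathcal{P}(S)$, the Prokhorov distance is $\rho_P^S(\mu,\nu)=\inf\{\epsilon>0:\mu(B)\le\nu(B^\epsilon)+\epsilon\text{ for all Borel sets }B\}$, where $B^\epsilon=\{x\in S:d(x,B)<\epsilon\}$; for $S$-valued random variables $U,V$, $\rho_P^S(U,V)=\rho_P^S(\operatorname{law}(U),\operatorname{law}(V))$. $a\vee b=\max(a,b)$. *)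

(* Defs.v *)
From HB Require Import structures.
From mathcomp Require Import all_boot all_order all_algebra.
From mathcomp Require Import all_classical all_reals all_analysis.
Set Implicit Arguments. Unset Strict Implicit. Unset Printing Implicit Defensive.
Import Order.TTheory GRing.Theory Num.Theory.
Local Open Scope classical_set_scope.
Local Open Scope ring_scope.

Section Defs.
Variable R : realType.

Definition cauchy_seq (S : Type) (d : S -> S -> R) (u : nat -> S) : Prop :=
  forall e : R, 0 < e -> exists N : nat, forall m n : nat,
    (N <= m)%N -> (N <= n)%N -> d (u m) (u n) < e.

Definition converges_to (S : Type) (d : S -> S -> R) (u : nat -> S) (l : S) :=
  forall e : R, 0 < e -> exists N : nat, forall n : nat, (N <= n)%N -> d (u n) l < e.

Definition polish_space (S : Type) (d : S -> S -> R) : Prop :=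
  (forall x y, 0 <= d x y) /\
  (forall x y, d x y = 0 <-> x = y) /\
  (forall x y, d x y = d y x) /\
  (forall x y z, d x z <= d x y + d y z) /\
  (forall u, cauchy_seq d u -> exists l, converges_to d u l) /\
  (exists u : nat -> S, forall x (e : R), 0 < e -> exists n, d x (u n) < e).

Definition metric_open (S : Type) (d : S -> S -> R) (O : set S) : Prop :=
  forall x, O x -> exists2 e : R, 0 < e & forall y, d x y < e -> O y.

Definition borel (S : Type) (d : S -> S -> R) : set (set S) :=
  smallest (sigma_algebra setT) (metric_open d).

Definition borel_prod (S' S : Type) (d' : S' -> S' -> R) (d : S -> S -> R)
  : set (set (S' * S)) :=
  smallest (sigma_algebra setT) [set A `*` B | A in borel d' & B in borel d].

Definition enlarge (S : Type) (d : S -> S -> R) (B : set S) (eps : R) : set S :=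
  [set x | exists2 b, B b & d x b < eps].

Section Prob.
Context {dT : measure_display} {T : measurableType dT} (P : probability T R).

Definition random_var (S : Type) (d : S -> S -> R) (X : T -> S) : Prop :=
  forall B, borel d B -> measurable (X @^-1` B).

Definition indep_rv (S' S : Type) (d' : S' -> S' -> R) (d : S -> S -> R)
  (X : T -> S') (Y : T -> S) : Prop :=
  forall A B, borel d' A -> borel d B ->
    P (X @^-1` A `&` Y @^-1` B) = (P (X @^-1` A) * P (Y @^-1` B))%E.

Definition prokhorov (S : Type) (d : S -> S -> R) (Y Z : T -> S) : R :=
  inf [set eps : R | 0 < eps /\ forall B, borel d B ->
        (P (Y @^-1` B) <= P (Z @^-1` enlarge d B eps) + eps%:E)%E].

End Prob.
End Defs.

(* Main.v *)
Require Import Defs.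
From HB Require Import structures.
From mathcomp Require Import all_boot all_order all_algebra.
From mathcomp Require Import all_classical all_reals all_analysis.
From mathcomp Require Import measurable_realfun ring lra.
Import Order.TTheory GRing.Theory Num.Theory.
Local Open Scope classical_set_scope.
Local Open Scope ring_scope.

Section sigma_helpers.
Context {U : Type} (G : set (set U)).
Local Notation B := (smallest (sigma_algebra setT) G).

Lemma sT : B setT.
Proof. by have := @sigma_algebraCD U setT G set0 (@sigma_algebra0 _ _ _); rewrite setD0. Qed.

Lemma sC A : B A -> B (~` A).
Proof. by move=> hA; have := sigma_algebraCD hA; rewrite setTD. Qed.

Lemma sU A1 A2 : B A1 -> B A2 -> B (A1 `|` A2).
Proof.
move=> h1 h2.
have -> : A1 `|` A2 = \bigcup_n (if n == 0%N then A1 else A2).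
  apply/seteqP; split => x /=.
    by case=> h; [exists 0%N|exists 1%N].
  by case=> -[|n] _ /=; [left|right].
by apply: sigma_algebra_bigcup => -[|n].
Qed.

Lemma sI A1 A2 : B A1 -> B A2 -> B (A1 `&` A2).
Proof.
move=> h1 h2; have -> : A1 `&` A2 = ~` (~` A1 `|` ~` A2).
  by rewrite setCU !setCK.
by apply: sC; apply: sU; apply: sC.
Qed.

Lemma sD A1 A2 : B A1 -> B A2 -> B (A1 `\` A2).
Proof. by move=> h1 h2; rewrite setDE; apply: sI => //; apply: sC. Qed.

End sigma_helpers.
Lemma PsetT (R : realType) d (T : measurableType d) (P : probability T R) :
  (P : {measure set T -> \bar R}) setT = 1%E.
Proof. exact: probability_setT. Qed.

Section disint.
Context (R : realType) (dT : measure_display) (T : measurableType dT)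
  (P : probability T R) (S : Type) (d : S -> S -> R) (S' : Type) (d' : S' -> S' -> R)
  (X : T -> S') (W : T -> S)
  (hX : random_var d' X) (hW : random_var d W) (ind : indep_rv P d' d X W).

Definition sec (C : set (S' * S)) (s : S') : set S := [set y | C (s, y)].
Definition phi (C : set (S' * S)) (w : T) : \bar R := P (W @^-1` sec C (X w)).
Definition XW (w : T) : S' * S := (X w, W w).

Definition Good (C : set (S' * S)) : Prop :=
  [/\ measurable (XW @^-1` C), (forall s, borel d (sec C s)),
      measurable_fun setT (phi C) & P (XW @^-1` C) = (\int[P]_w phi C w)%E].

Lemma phi_ge0 C w : (0 <= phi C w)%E.
Proof. exact: measure_ge0. Qed.

Lemma phi_le1 C w : borel d (sec C (X w)) -> (phi C w <= 1)%E.
Proof. by move=> h; apply: probability_le1; apply: hW. Qed.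

Lemma Good_integrable C : Good C -> P.-integrable setT (phi C).
Proof.
case=> _ hs mphi _; apply/integrableP; split => //.
apply: (@le_lt_trans _ _ (\int[P]_w (cst 1%E w))%E).
  apply: ge0_le_integral => //.
  - by apply: measurableT_comp => //.
  - move=> w _; rewrite gee0_abs ?phi_ge0 //; exact: phi_le1.
rewrite integral_cst // mul1e; apply: (le_lt_trans (probability_le1 P measurableT)); exact: ltry.
Qed.

Lemma Good_rect : [set A `*` B | A in borel d' & B in borel d] `<=` Good.
Proof.
move=> _ [A hA [B hB <-]].
have mXA := hX _ hA; have mWB := hW _ hB.
have phiE : phi (A `*` B) = fun w => (fine (P (W @^-1` B)) * \1_(X @^-1` A) w)%:E.
  apply/funext => w; rewrite /phi indicE.
  have [Aw|nAw] := pselect (A (X w)).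
    rewrite mem_set // mulr1 fineK; last exact: fin_num_measure.
    by congr (P _); apply/seteqP; split => y /=; [case|].
  rewrite memNset // mulr0.
  have -> : W @^-1` sec (A `*` B) (X w) = set0.
    by apply/seteqP; split => y //= [].
  exact: measure0.
split.
- exact: measurableI.
- move=> s; have [As|nAs] := pselect (A s).
    have -> : sec (A `*` B) s = B by apply/seteqP; split => y /=; [case|].
    exact: hB.
  have -> : sec (A `*` B) s = set0 by apply/seteqP; split => y //= [].
  exact: sigma_algebra0.
- rewrite phiE; apply/measurable_EFinP; apply: measurable_funM => //.
- rewrite phiE (@integralZl_indic _ _ _ _ _ _ (fun _ => X @^-1` A)) //; last first.
    move=> h; exfalso; move: h; apply/negP; rewrite -leNgt.
    apply: fine_ge0; exact: measure_ge0.
  rewrite integral_indic // setIT fineK; last exact: fin_num_measure.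
  by rewrite muleC; apply: ind.
Qed.


Lemma Good_lambda : lambda_system setT Good.
Proof.
split.
- by [].
- split.
  + by rewrite preimage_setT.
  + move=> s; exact: sT.
  + have -> : phi setT = cst 1%E.
      apply/funext => w; rewrite /phi /=.
      have -> : W @^-1` sec setT (X w) = setT by [].
      exact: probability_setT.
    exact: measurable_cst.
  + have -> : phi setT = cst 1%E.
      apply/funext => w; rewrite /phi /=.
      have -> : W @^-1` sec setT (X w) = setT by [].
      exact: probability_setT.
    rewrite integral_cst // mul1e preimage_setT.
    by [].
- move=> A B BA GA GB.
  have GA' := GA; have GB' := GB.
  case: GA => mA sA mpA eA; case: GB => mB sB mpB eB.
  have phiE : phi (A `\` B) = fun w => (phi A w - phi B w)%E.
    apply/funext => w; rewrite /phi.
    have -> : W @^-1` sec (A `\` B) (X w) =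
      W @^-1` sec A (X w) `\` W @^-1` sec B (X w) by [].
    rewrite measureD; first last.
    - apply: (le_lt_trans (probability_le1 P _)); [exact: hW|exact: ltry].
    - exact: hW.
    - exact: hW.
    congr (_ - P _)%E; apply/seteqP; split => y /=; first by case.
    by move=> h; split => //; apply: BA.
  split.
  + have -> : XW @^-1` (A `\` B) = XW @^-1` A `\` XW @^-1` B by [].
    exact: measurableD.
  + by move=> s; apply: sD; [exact: sA|exact: sB].
  + rewrite phiE; exact: emeasurable_funB.
  + rewrite phiE integralB //; try exact: Good_integrable.
    rewrite -eA -eB.
    have -> : XW @^-1` (A `\` B) = XW @^-1` A `\` XW @^-1` B by [].
    rewrite measureD //; last first.
      apply: (le_lt_trans (probability_le1 P _)) => //; exact: ltry.
    congr (_ - P _)%E; apply/seteqP; split => y /=; first by case.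
    by move=> h; split => //; apply: BA.
- move=> F ndF GF.
  have hsub n m : (n <= m)%N -> F n `<=` F m.
    by move=> nm; rewrite -subsetEset; apply: ndF.
  have phicvg w : phi (F n) w @[n --> \oo] --> phi (\bigcup_n F n) w.
    rewrite /phi.
    have -> : W @^-1` sec (\bigcup_n F n) (X w) =
      \bigcup_n (W @^-1` sec (F n) (X w)) by [].
    apply: (nondecreasing_cvg_mu (F := fun n => W @^-1` sec (F n) (X w))).
    + by move=> n; apply: hW; case: (GF n).
    + apply: bigcupT_measurable => n; apply: hW; case: (GF n) => _ + _ _; apply.
    + move=> n m nm; rewrite subsetEset => y /=; exact: hsub.
  have mphi : measurable_fun setT (phi (\bigcup_n F n)).
    apply: (@emeasurable_fun_cvg _ _ _ _ (fun n => phi (F n))).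
      by move=> n; case: (GF n).
    by move=> w _; apply: phicvg.
  have mU : measurable (XW @^-1` \bigcup_n F n).
    rewrite preimage_bigcup; apply: bigcupT_measurable => n; by case: (GF n).
  split => //.
  + move=> s; apply: sigma_algebra_bigcup => n; by case: (GF n) => _ + _ _; apply.
  + have h1 : P (XW @^-1` F n) @[n --> \oo] --> P (XW @^-1` \bigcup_n F n).
      rewrite preimage_bigcup.
      apply: (nondecreasing_cvg_mu (F := fun n => XW @^-1` F n)).
      * by move=> n; case: (GF n).
      * by rewrite -preimage_bigcup.
      * move=> n m nm; rewrite subsetEset => y /=; exact: hsub.
    have h2 : (\int[P]_w phi (F n) w)%E @[n --> \oo] -->
              (\int[P]_w phi (\bigcup_n F n) w)%E.
      have := @cvg_monotone_convergence _ _ _ P setT measurableT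
        (fun n => phi (F n)).
      have -> : (fun x => limn (fun n => phi (F n) x)) = phi (\bigcup_n F n).
        apply/funext => w; apply: cvg_lim => //; exact: phicvg.
      apply.
      * by move=> n; case: (GF n).
      * by move=> n w _; exact: phi_ge0.
      * move=> w _ n m nm; apply: le_measure.
        -- rewrite inE; apply: hW; by case: (GF n).
        -- rewrite inE; apply: hW; by case: (GF m).
        -- move=> y /=; exact: hsub.
    have h3 : (fun n => P (XW @^-1` F n)) = (fun n => \int[P]_w phi (F n) w)%E.
      by apply/funext => n; case: (GF n).
    rewrite h3 in h1.
    exact: (cvg_unique _ h1 h2).
Qed.

Lemma Good_borel (C : set (S' * S)) : borel_prod d' d C -> Good C.
Proof.
have setIG : setI_closed [set A `*` B | A in borel d' & B in borel d].
  move=> _ _ [A hA [B hB <-]] [A' hA' [B' hB' <-]].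
  exists (A `&` A'); first exact: sI.
  by exists (B `&` B'); [exact: sI|rewrite setXI].
move=> hC.
exact: (@lambda_system_subset _ _ setIG setT Good Good_lambda Good_rect _ C hC).
Qed.

End disint.

Arguments Good_borel {R dT T P S d S' d' X W}.
Arguments XW {dT T S S'}.

Section compare.
Context (R : realType) (dT : measure_display) (T : measurableType dT)
  (P : probability T R) (S : Type) (d : S -> S -> R) (S' : Type) (d' : S' -> S' -> R)
  (g : S' * S -> R) (K : R)
  (g_meas : forall B : set R, measurable B -> borel_prod d' d (g @^-1` B))
  (K0 : 0 <= K)
  (g_lip : forall x y z, `|g (x, y) - g (x, z)| <= K * d y z)
  (X : T -> S') (W1 W2 : T -> S)
  (hX : random_var d' X) (hW1 : random_var d W1) (hW2 : random_var d W2)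
  (ind1 : indep_rv P d' d X W1) (ind2 : indep_rv P d' d X W2)
  (hd0 : forall x y, 0 <= d x y)
  (dsym : forall x y, d x y = d y x)
  (dtri : forall x y z, d x z <= d x y + d y z).

Lemma enlarge_borel B e : borel d (enlarge d B e).
Proof.
apply: sub_sigma_algebra => x [b Bb xb].
exists (e - d x b); first by rewrite subr_gt0.
move=> y xy; exists b => //.
have := dtri y x b; rewrite (dsym y x) => h.
by apply: (le_lt_trans h); rewrite -ltrBrDr.
Qed.

Lemma Cle_borel r : borel_prod d' d [set p | g p <= r].
Proof.
have -> : [set p | g p <= r] = g @^-1` `]-oo, r]%classic.
  by apply/seteqP; split => p /=; rewrite in_itv /=.
apply: g_meas; exact: measurable_itv.
Qed.

Lemma compare e t : 0 < e ->
  (forall B, borel d B -> (P (W1 @^-1` B) <= P (W2 @^-1` enlarge d B e) + e%:E)%E) ->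
  (P [set w | (g (X w, W1 w) <= t - K * e)%R] <= P [set w | (g (X w, W2 w) <= t)%R] + e%:E)%E.
Proof.
move=> e0 hB.
have [m1 s1 mp1 eq1] := Good_borel hX hW1 ind1 _ (Cle_borel (t - K * e)).
have [m2 s2 mp2 eq2] := Good_borel hX hW2 ind2 _ (Cle_borel t).
have -> : [set w | g (X w, W1 w) <= t - K * e] =
  XW X W1 @^-1` [set p | g p <= t - K * e] by [].
have -> : [set w | g (X w, W2 w) <= t] = XW X W2 @^-1` [set p | g p <= t] by [].
rewrite eq1 eq2.
have -> : e%:E = (\int[P]_w cst e%:E w)%E.
  by rewrite integral_cst // PsetT mule1.
rewrite -ge0_integralD //; try exact: measurable_cst.
all: try by move=> w _; rewrite lee_fin ltW.
all: try by move=> w _; exact: measure_ge0.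
apply: ge0_le_integral => //.
  by apply: emeasurable_funD => //; exact: measurable_cst.
move=> w _; rewrite /phi.
apply: (le_trans (hB _ (s1 (X w)))).
rewrite leeD2r //; apply: le_measure.
- rewrite inE; apply: hW2; exact: enlarge_borel.
- rewrite inE; apply: hW2; exact: s2.
move=> u /= [b hb hzb]; rewrite /sec /= in hb *; move: hzb; set z := W2 u => hzb.
have h1 := g_lip (X w) z b.
have h2 : K * d z b <= K * e by apply: ler_wpM2l => //; exact: ltW.
have h3 : g (X w, z) - g (X w, b) <= `|g (X w, z) - g (X w, b)| := ler_norm _.
have h4 : g (X w, z) - g (X w, b) <= K * e := le_trans h3 (le_trans h1 h2).
by have := lerD h4 hb; rewrite subrK (addrC (K * e)) subrK.
Qed.

Lemma compare_sym e :
  (forall B, borel d B -> (P (W1 @^-1` B) <= P (W2 @^-1` enlarge d B e) + e%:E)%E) ->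
  (forall B, borel d B -> (P (W2 @^-1` B) <= P (W1 @^-1` enlarge d B e) + e%:E)%E).
Proof.
move=> hB B bB.
have bA : borel d (~` enlarge d B e) by apply: sC; exact: enlarge_borel.
have := hB _ bA.
have sub : enlarge d (~` enlarge d B e) e `<=` ~` B.
  move=> z [a na za] Bz; apply: na; exists z => //; by rewrite dsym.
have mE := hW1 _ (enlarge_borel B e).
have mB := hW2 _ bB.
have le2 : (P (W2 @^-1` enlarge d (~` enlarge d B e) e) <= P (W2 @^-1` ~` B))%E.
  apply: le_measure.
  - rewrite inE; apply: hW2; exact: enlarge_borel.
  - rewrite inE; apply: hW2; exact: sC.
  - by move=> y /= /sub.
move=> h; have {h le2} h := le_trans h (leeD le2 (lexx _)).
have pc : forall (V : T -> S) (A : set S), measurable (V @^-1` A) ->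
    (P : {measure set T -> \bar R}) (V @^-1` ~` A) = (1 - P (V @^-1` A))%E.
  by move=> V A mA; exact: (probability_setC P mA).
rewrite (pc _ _ mE) (pc _ _ mB) in h.
rewrite -(fineK (fin_num_measure P _ mE)) -(fineK (fin_num_measure P _ mB)) in h *.
rewrite -!EFinB -!EFinD !lee_fin in h *.
lra.
Qed.

End compare.

Arguments Cle_borel {R S d S' d' g} g_meas r.
Arguments compare {R dT T P S d S' d' g K} g_meas K0 g_lip {X W1 W2} hX hW1 hW2 ind1 ind2 dsym dtri {e} t.
Arguments compare_sym {R dT T P S d W1 W2} hW1 hW2 dsym dtri {e}.

Lemma arith (R : realType) (a b a1 a2 eps k q : R) : a1 <= b + eps -> b <= a2 + eps ->
  `|a - a1| <= q -> `|a2 - a| <= q -> eps <= k -> `|a - b| <= k + q.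
Proof.
move=> h1 h2 /ler_normlP [h3 h4] /ler_normlP [h5 h6] h7.
apply/ler_normlP; split; lra.
Qed.

Lemma fine_le (R : realType) (dT : measure_display) (T : measurableType dT)
  (P : probability T R) (A B : set T) (e : R) :
  measurable A -> measurable B -> (P A <= P B + e%:E)%E -> fine (P A) <= fine (P B) + e.
Proof.
move=> mA mB.
rewrite -(fineK (fin_num_measure P _ mA)) -(fineK (fin_num_measure P _ mB)).
by rewrite -EFinD lee_fin.
Qed.

Arguments fine_le {R dT T P A B e}.

Theorem corollary3p8 (R : realType) (dT : measure_display) (T : measurableType dT)
  (P : probability T R)
  (S : Type) (d : S -> S -> R) (S' : Type) (d' : S' -> S' -> R)
  (hS : polish_space d) (hS' : polish_space d')
  (g : S' * S -> R) (K L : R)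
  (g_meas : forall B : set R, measurable B -> borel_prod d' d (g @^-1` B))
  (g_lip : forall x y z, `|g (x, y) - g (x, z)| <= K * d y z)
  (X : T -> S') (Y Z : T -> S)
  (hX : random_var d' X) (hY : random_var d Y) (hZ : random_var d Z)
  (indXY : indep_rv P d' d X Y) (indXZ : indep_rv P d' d X Z)
  (cdf_lip : forall s t : R,
     `|fine (P [set w | g (X w, Y w) <= s]) - fine (P [set w | g (X w, Y w) <= t])|
       <= L * `|s - t|) :
  forall x : R,
    `|fine (P [set w | g (X w, Y w) <= x]) - fine (P [set w | g (X w, Z w) <= x])|
      <= (1 + L) * Num.max 1 K * prokhorov P d Y Z.
Proof.
move=> x.
have [d0 [_ [dsym [dtri _]]]] := hS.
set Km := Num.max 1 K.
have Km1 : 1 <= Km by rewrite le_max lexx.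
have Km0 : 0 <= Km := le_trans ler01 Km1.
have lipKm : forall x y z, `|g (x, y) - g (x, z)| <= Km * d y z.
  move=> u y z; apply: (le_trans (g_lip u y z)); apply: ler_wpM2r => //.
  by rewrite le_max lexx orbT.
have L0 : 0 <= L.
  have := cdf_lip 1 0; rewrite subr0 normr1 mulr1; apply: le_trans; exact: normr_ge0.
have mset : forall (W : T -> S) t, random_var d W -> indep_rv P d' d X W ->
    measurable [set w | g (X w, W w) <= t].
  move=> W t hW ind.
  have [m _ _ _] := Good_borel hX hW ind _ (Cle_borel g_meas t).
  exact: m.
set a := fine (P [set w | g (X w, Y w) <= x]).
set b := fine (P [set w | g (X w, Z w) <= x]).
have c0 : 0 < (1 + L) * Km.
  by apply: mulr_gt0; [lra|exact: lt_le_trans ltr01 Km1].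
have key : forall eps, 0 < eps ->
    (forall B, borel d B -> (P (Y @^-1` B) <= P (Z @^-1` enlarge d B eps) + eps%:E)%E) ->
    `|a - b| <= (1 + L) * Km * eps.
  move=> eps e0 H1.
  have H2 := compare_sym hY hZ dsym dtri H1.
  have c1 := compare g_meas Km0 lipKm hX hY hZ indXY indXZ dsym dtri x e0 H1.
  have c2 := compare g_meas Km0 lipKm hX hZ hY indXZ indXY dsym dtri (x + Km * eps) e0 H2.
  rewrite addrK in c2.
  have c1' := fine_le (mset _ _ hY indXY) (mset _ _ hZ indXZ) c1.
  have c2' := fine_le (mset _ _ hZ indXZ) (mset _ _ hY indXY) c2.
  have l1 := cdf_lip x (x - Km * eps).
  have hk : 0 <= Km * eps := mulr_ge0 Km0 (ltW e0).
  have ek1 : x - (x - Km * eps) = Km * eps by ring.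
  rewrite ek1 (ger0_norm hk) in l1.
  have l2 := cdf_lip (x + Km * eps) x.
  have ek2 : x + Km * eps - x = Km * eps by ring.
  rewrite ek2 (ger0_norm hk) in l2.
  have -> : (1 + L) * Km * eps = Km * eps + L * (Km * eps) by ring.
  apply: (@arith _ _ _ _ _ _ _ _ c1' c2' l1 l2).
  by rewrite -{1}(mul1r eps); apply: ler_wpM2r => //; exact: ltW.
rewrite /prokhorov.
set E := [set eps : R | _].
have hE : E !=set0.
  exists 1; split; first exact: ltr01.
  move=> B hB; apply: (le_trans (probability_le1 P (hY _ hB))).
  by apply: leeDr; exact: measure_ge0.
have lb : lbound E (`|a - b| / ((1 + L) * Km)).
  move=> eps [e0 H1]; rewrite ler_pdivrMr // mulrC; exact: key.
have := lb_le_inf hE lb.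
by rewrite ler_pdivrMr // mulrC.
Qed.
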